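(* Let $T : M_{m,n}\to M_{r,s}$ be a triple morphism which is not identically zero. Then $T$ is one-to-one, and there exist an integer $k\ge 1$ and unitary matrices $U\in M_r$, $V\in M_s$ such that $$T(A) = U\,\mathrm{diag}\{A, A,\dots, A, 0\}\,V\qquad (A\in M_{m,n}),$$ where $\mathrm{diag}\{A,\dots,A,0\}$ is the block-diagonal $r\times s$ matrix with $k$ copies of $A$ followed by a zero block of size $(r-km)\times(s-kn)$ (possibly empty).
   Context: $M_{m,n}$ denotes the $m\times n$ complex matrices, a triple system with product $xy^*z$. A triple morphism is a linear map $T$ with $T(xy^*z) = T(x)T(y)^*T(z)$. *)

(* Defs.v *)
From HB Require Import structures.
From mathcomp Require Import all_boot all_order all_algebra.
From mathcomp Require Import complex.
From mathcomp Require Import Rstruct.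
Set Implicit Arguments.
Unset Strict Implicit.
Unset Printing Implicit Defensive.
Import Order.TTheory GRing.Theory Num.Theory.
Local Open Scope ring_scope.

Definition CC : numClosedFieldType := (Rdefinitions.R)[i].

Definition adjmx (m n : nat) (A : 'M[CC]_(m, n)) : 'M[CC]_(n, m) :=
  map_mx Num.conj A^T.

Definition triple (m n : nat) (x y z : 'M[CC]_(m, n)) : 'M[CC]_(m, n) :=
  x *m adjmx y *m z.

Definition triple_morphism (m n r s : nat) (T : 'M[CC]_(m, n) -> 'M[CC]_(r, s)) :=
  linear T /\ forall x y z, T (triple x y z) = triple (T x) (T y) (T z).

Definition unitary_mx (n : nat) (U : 'M[CC]_n) :=
  U *m adjmx U = 1%:M /\ adjmx U *m U = 1%:M.

Definition mx_at (m n : nat) (A : 'M[CC]_(m, n)) (a b : nat) : CC :=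
  match insub a, insub b with
  | Some i, Some j => A i j
  | _, _ => 0
  end.

(* diag{A, ..., A, 0} : the r x s block-diagonal matrix with k copies of A
   (the l-th copy, l < k, occupying rows l*m .. l*m+m-1 and columns
   l*n .. l*n+n-1) followed by a zero block of size (r - k m) x (s - k n). *)
Definition blockdiag_rep (m n r s k : nat) (A : 'M[CC]_(m, n)) : 'M[CC]_(r, s) :=
  \matrix_(i < r, j < s)
    if [&& (i < k * m)%N, (j < k * n)%N & (i %/ m == j %/ n)%N]
    then mx_at A (i %% m) (j %% n) else 0.

(* Main.v *)
Require Import Defs.
From HB Require Import structures.
From mathcomp Require Import all_boot all_order all_algebra.
From mathcomp Require Import sesquilinear spectral.
Import GRing.Theory Num.Theory.
Local Open Scope ring_scope.
Local Open Scope sesquilinear_scope.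

Section Idx.
Variables (k m : nat).

Lemma idx_proof (l : 'I_k) (i : 'I_m) : (l * m + i < k * m)%N.
Proof.
apply: (@leq_trans (l * m + m)); first by rewrite ltn_add2l.
by rewrite -mulSnr leq_mul2r ltn_ord orbT.
Qed.
Definition idx (l : 'I_k) (i : 'I_m) : 'I_(k * m) := Ordinal (idx_proof l i).

Lemma m_pos (p : 'I_(k * m)) : (0 < m)%N.
Proof. by case: m p => [|//] [x]; rewrite muln0. Qed.

Lemma dv_proof (p : 'I_(k * m)) : (p %/ m < k)%N.
Proof. by rewrite ltn_divLR ?(m_pos p). Qed.
Lemma md_proof (p : 'I_(k * m)) : (p %% m < m)%N.
Proof. by rewrite ltn_pmod ?(m_pos p). Qed.
Definition dv p : 'I_k := Ordinal (dv_proof p).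
Definition md p : 'I_m := Ordinal (md_proof p).

Lemma idxK p : idx (dv p) (md p) = p.
Proof. by apply: val_inj; rewrite /= -divn_eq. Qed.
Lemma dv_idx l i : dv (idx l i) = l.
Proof.
apply: val_inj => /=; have mp := m_pos (idx l i).
by rewrite divnMDl // divn_small ?addn0.
Qed.
Lemma md_idx l i : md (idx l i) = i.
Proof. by apply: val_inj => /=; rewrite modnMDl modn_small. Qed.
Lemma eq_idx l i l' i' : (idx l i == idx l' i') = (l == l') && (i == i').
Proof.
apply/eqP/andP => [E|[/eqP-> /eqP->]] //.
by split; apply/eqP; [rewrite -(dv_idx l i) E dv_idx | rewrite -(md_idx l i) E md_idx].
Qed.
Lemma idx_cases (P : 'I_(k * m) -> Prop) : (forall l i, P (idx l i)) -> forall p, P p.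
Proof. by move=> H p; rewrite -(idxK p). Qed.

Lemma sum_idx (V : nmodType) (F : 'I_(k * m) -> V) :
  \sum_(p < k * m) F p = \sum_(l < k) \sum_(i < m) F (idx l i).
Proof.
rewrite pair_big /= (reindex (fun li : 'I_k * 'I_m => idx li.1 li.2)) //=.
by exists (fun p => (dv p, md p)) => [[l i]|p] _ /=; rewrite ?dv_idx ?md_idx ?idxK.
Qed.
End Idx.
Arguments idx {k m}.
Arguments dv {k m}.
Arguments md {k m}.
Arguments idx_cases {k m}.
Arguments sum_idx {k m V}.


Lemma adjE m n (A : 'M[CC]_(m,n)) : adjmx A = A ^t*. Proof. by []. Qed.
Lemma adjM m n p (A : 'M[CC]_(m,n)) (B : 'M[CC]_(n,p)) : (A *m B)^t* = B^t* *m A^t*.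
Proof. by rewrite trmx_mul map_mxM. Qed.
Lemma adjK m n (A : 'M[CC]_(m,n)) : A^t*^t* = A.
Proof. exact: trmxCK. Qed.
Lemma adj0 m n : (0 : 'M[CC]_(m,n))^t* = 0.
Proof. by apply/matrixP => i j; rewrite !mxE rmorph0. Qed.
Lemma adj_delta m n (i : 'I_m) (j : 'I_n) : (delta_mx i j : 'M[CC]_(m,n))^t* = delta_mx j i.
Proof. by apply/matrixP => a b; rewrite !mxE andbC rmorph_nat. Qed.

Lemma mxE_row m n p (A : 'M[CC]_(m,n)) (B : 'M[CC]_(n,p)) a b :
  (A *m B) a b = (row a A *m col b B) 0 0.
Proof. by rewrite !mxE; apply: eq_bigr => z _; rewrite !mxE. Qed.
Lemma col_adj m n (B : 'M[CC]_(m,n)) q : col q (B^t*) = (row q B)^t*.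
Proof. by apply/matrixP => a b; rewrite !mxE. Qed.
Lemma mul_delta m n p q (A : 'M[CC]_(m,n)) a b (B : 'M[CC]_(p,q)) :
  A *m delta_mx a b *m B = col a A *m row b B.
Proof.
have -> : delta_mx a b = delta_mx a (0 : 'I_1) *m delta_mx 0 b :> 'M[CC]_(n,p).
  by rewrite mul_delta_mx.
by rewrite mulmxA -colE -mulmxA -rowE.
Qed.
Lemma sum_rows m n (B : 'M[CC]_(m,n)) : B^t* *m B = \sum_l (row l B)^t* *m row l B.
Proof.
apply/matrixP => a b; rewrite summxE !mxE; apply: eq_bigr => l _.
by rewrite !mxE big_ord1 !mxE.
Qed.

Local Notation "B ^!" :=
  (orthomx Num.conj (mx_of_hermitian (hermitian1mx _)) B) : matrix_set_scope.

Lemma complete_unitary p n (C : 'M[CC]_(p,n)) : C *m C^t* = 1%:M ->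
  exists q (X : 'M[CC]_(q,n)), ((p + q = n)%N * (col_mx C X \is unitarymx))%type.
Proof.
move=> CC1; have Cu : C \is unitarymx by apply/unitarymxP.
exists (\rank C^!%MS), (schmidt (row_base C^!%MS)); split.
  by rewrite -{1}(mxrank_unitary Cu) add_rank_ortho.
apply/unitarymxP; rewrite tr_col_mx map_row_mx mul_col_row CC1.
rewrite (unitarymxP (schmidt_unitarymx _ (rank_leq_col _))).
have nsV : (schmidt (row_base C^!%MS) <= C^!)%MS.
  by rewrite eqmx_schmidt_free ?eq_row_base ?row_base_free.
rewrite !(orthomx1P _) -?scalar_mx_block //.
by rewrite orthomx_sym.
Qed.

Lemma castmx_unitary a b n (e : a = b) (M : 'M[CC]_(a, n)) :
  M \is unitarymx -> castmx (e, erefl n) M \is unitarymx.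
Proof. by case: b / e; rewrite castmx_id. Qed.
Lemma adj_cast a b n (e : a = b) (M : 'M[CC]_(a, n)) :
  (castmx (e, erefl n) M)^t* = castmx (erefl n, e) (M^t*).
Proof. by case: b / e; rewrite !castmx_id. Qed.
Lemma castmx_mul3 a p p' q q' b (e1 : p = p') (e2 : q = q')
   (A : 'M[CC]_(a,p)) (B : 'M[CC]_(p,q)) (C : 'M[CC]_(q,b)) :
  castmx (erefl a, e1) A *m castmx (e1, e2) B *m castmx (e2, erefl b) C = A *m B *m C.
Proof. by case: p' / e1; case: q' / e2; rewrite !castmx_id. Qed.
Lemma unitary_of n (U : 'M[CC]_n) : U \is unitarymx -> unitary_mx U.
Proof.
move=> /unitarymxP H; rewrite /unitary_mx adjE; split => //.
exact: mulmx1C.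
Qed.

Lemma sum_if1 (R : nmodType) (N : nat) (x : 'I_N) (f : 'I_N -> R) :
  (forall y, y != x -> f y = 0) -> \sum_y f y = f x.
Proof. by move=> H; rewrite (bigD1 x) // -[RHS]addr0; congr (_ + _); apply: big1 => y /andP [_]; exact: H. Qed.

Section Main.
Variables (m n r s : nat) (T : 'M[CC]_(m.+1, n.+1) -> 'M[CC]_(r, s)).
Hypothesis Tlin : linear T.
Hypothesis Ttr : forall x y z, T (triple x y z) = triple (T x) (T y) (T z).

Lemma TD x y : T (x + y) = T x + T y.
Proof. by have := Tlin 1 x y; rewrite !scale1r. Qed.
Lemma T0 : T 0 = 0.
Proof. by have := TD 0 0; rewrite addr0 => /(congr1 (fun x => x - T 0)) /=; rewrite subrr addrK => /esym. Qed.
Lemma TZ a x : T (a *: x) = a *: T x.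
Proof. by have := Tlin a x 0; rewrite !addr0 T0 addr0. Qed.
Lemma Tsum (I : finType) (f : I -> 'M[CC]_(m.+1, n.+1)) : T (\sum_i f i) = \sum_i T (f i).
Proof. exact: (big_morph T TD T0). Qed.

Definition F i j := T (delta_mx i j).

Lemma FR i j k l p q :
  F i j *m (F k l)^t* *m F p q = if (j == l) && (k == p) then F i q else 0.
Proof.
rewrite /F -[_ *m _ *m _]/(triple _ _ _) -Ttr /triple adjE adj_delta.
rewrite !mul_delta_mx_cond.
case: (j == l); rewrite ?mulr1n ?mulr0n ?mul0mx ?T0 // mul_delta_mx_cond.
by case: (k == p); rewrite ?mulr1n ?mulr0n ?T0.
Qed.

Definition W := F 0 0.
Definition P := W^t* *m W.

Lemma WWW : W *m W^t* *m W = W.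
Proof. by rewrite /W FR !eqxx. Qed.
Lemma F_P i : F i 0 *m P = F i 0.
Proof. by rewrite /P mulmxA FR !eqxx. Qed.
Lemma F_dec i j : F i j = F i 0 *m W^t* *m F 0 j.
Proof. by rewrite /W FR !eqxx. Qed.
Lemma P_orth i' i : P *m (F i' 0)^t* *m F i 0 = if i' == i then P else 0.
Proof.
rewrite /P -!mulmxA [W *m (_ *m _)]mulmxA FR eqxx /=.
by case: (i' == i); rewrite ?mulmx0 ?mulmxA.
Qed.
Lemma F0_orth j j' : F 0 j *m (F 0 j')^t* *m W = if j == j' then W else 0.
Proof. by rewrite /W FR eqxx andbT. Qed.

Definition k := \rank W.
Definition B : 'M[CC]_(k, s) := schmidt (row_base W).

Lemma BB : B *m B^t* = 1%:M.
Proof. exact: (unitarymxP (schmidt_unitarymx _ (rank_leq_col W))). Qed.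
Lemma B_eq : (B :=: W)%MS.
Proof. exact: (eqmx_trans (eqmx_schmidt_free (row_base_free W)) (eq_row_base W)). Qed.
Lemma BP : B *m P = B.
Proof.
have /submxP [X ->] : (B <= W)%MS by rewrite B_eq.
by rewrite /P -mulmxA [W *m _]mulmxA WWW.
Qed.
Lemma WQ : W *m (B^t* *m B) = W.
Proof.
have /submxP [Y ->] : (W <= B)%MS by rewrite B_eq.
by rewrite -mulmxA [B *m _]mulmxA BB mul1mx.
Qed.
Lemma PQ : P = B^t* *m B.
Proof.
have Padj : P^t* = P by rewrite /P adjM adjK.
have Qadj : (B^t* *m B)^t* = B^t* *m B by rewrite adjM adjK.
have QP : B^t* *m B *m P = B^t* *m B by rewrite -mulmxA BP.
have PQ' : P *m (B^t* *m B) = P by rewrite /P -mulmxA WQ.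
by rewrite -Qadj -QP adjM Padj Qadj PQ'.
Qed.

Definition Cmat : 'M[CC]_(k * m.+1, r) :=
  \matrix_(p, c) (row (dv p) B *m (F (md p) 0)^t*) 0 c.
Definition Dmat : 'M[CC]_(k * n.+1, s) :=
  \matrix_(p, c) (row (dv p) B *m W^t* *m F 0 (md p)) 0 c.

Lemma rowC l i : row (idx l i) Cmat = row l B *m (F i 0)^t*.
Proof. by apply/rowP => c; rewrite /Cmat !mxE dv_idx md_idx. Qed.
Lemma rowD l j : row (idx l j) Dmat = row l B *m W^t* *m F 0 j.
Proof. by apply/rowP => c; rewrite /Dmat !mxE dv_idx md_idx. Qed.

Lemma rowBP l : row l B = row l B *m P.
Proof. by rewrite -row_mul BP. Qed.
Lemma rowBB l l' : (row l B *m (row l' B)^t*) 0 0 = (l == l')%:R.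
Proof. by rewrite -col_adj -mxE_row BB mxE. Qed.

Lemma Cunit : Cmat *m Cmat^t* = 1%:M.
Proof.
apply/matrixP; elim/(@idx_cases k m.+1) => l i; elim/(@idx_cases k m.+1) => l' i'.
rewrite mxE_row col_adj !rowC adjM adjK [1%:M _ _]mxE eq_idx.
have -> : row l B *m (F i 0)^t* *m (F i' 0 *m (row l' B)^t*) =
   row l B *m (P *m (F i 0)^t* *m F i' 0) *m (row l' B)^t*.
  by rewrite {1}rowBP !mulmxA.
rewrite P_orth; case: (i == i'); last by rewrite andbF mulmx0 mul0mx mxE.
by rewrite andbT -rowBP rowBB.
Qed.

Lemma Dunit : Dmat *m Dmat^t* = 1%:M.
Proof.
apply/matrixP; elim/(@idx_cases k n.+1) => l j; elim/(@idx_cases k n.+1) => l' j'.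
rewrite mxE_row col_adj !rowD !adjM adjK [1%:M _ _]mxE eq_idx.
have -> : row l B *m W^t* *m F 0 j *m ((F 0 j')^t* *m (W *m (row l' B)^t*)) =
   row l B *m W^t* *m (F 0 j *m (F 0 j')^t* *m W) *m (row l' B)^t*.
  by rewrite !mulmxA.
rewrite F0_orth; case: (j == j'); last by rewrite andbF mulmx0 mul0mx mxE.
by rewrite andbT -[row l B *m _ *m W]mulmxA -/P -rowBP rowBB.
Qed.

Definition Dl i j : 'M[CC]_(k * m.+1, k * n.+1) := \sum_(l < k) delta_mx (idx l i) (idx l j).
Definition GA (A : 'M[CC]_(m.+1, n.+1)) := \sum_i \sum_j A i j *: Dl i j.

Lemma termF i j : Cmat^t* *m Dl i j *m Dmat = F i j.
Proof.
transitivity (F i 0 *m (\sum_l (row l B)^t* *m row l B) *m W^t* *m F 0 j).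
  rewrite /Dl mulmx_sumr !mulmx_suml mulmx_sumr !mulmx_suml; apply: eq_bigr => l _.
  by rewrite mul_delta col_adj rowC rowD adjM adjK !mulmxA.
by rewrite -sum_rows -PQ F_P -F_dec.
Qed.

Lemma mainF A : Cmat^t* *m GA A *m Dmat = T A.
Proof.
rewrite {2}(matrix_sum_delta A) Tsum /GA mulmx_sumr mulmx_suml; apply: eq_bigr => i _.
rewrite Tsum mulmx_sumr mulmx_suml; apply: eq_bigr => j _.
by rewrite -scalemxAr -scalemxAl termF TZ.
Qed.

Lemma GAE A l i l' j : GA A (idx l i) (idx l' j) = if l == l' then A i j else 0.
Proof.
rewrite /GA summxE (@sum_if1 _ _ i) => [|i0 Hi]; last first.
  rewrite summxE big1 // => j0 _; rewrite !mxE summxE big1 ?mulr0 // => l0 _.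
  by rewrite mxE !eq_idx [i == _]eq_sym (negPf Hi) andbF andFb.
rewrite summxE (@sum_if1 _ _ j) => [|j0 Hj]; last first.
  rewrite !mxE summxE big1 ?mulr0 // => l0 _.
  by rewrite mxE !eq_idx [j == _]eq_sym (negPf Hj) !andbF.
rewrite !mxE summxE (@sum_if1 _ _ l) => [|l0 Hl]; last first.
  by rewrite mxE !eq_idx [l == _]eq_sym (negPf Hl).
rewrite mxE !eq_idx !eqxx andbT andTb [l' == l]eq_sym.
by case: (l == l'); rewrite ?mulr1 ?mulr0.
Qed.

Lemma BD_cast A q1 q2 (e1 : (k * m.+1 + q1 = r)%N) (e2 : (k * n.+1 + q2 = s)%N) :
  blockdiag_rep r s k A = castmx (e1, e2) (block_mx (GA A) 0 0 0).
Proof.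
apply/matrixP => a b; rewrite castmxE.
set a' := cast_ord _ a; set b' := cast_ord _ b.
rewrite /blockdiag_rep [LHS]mxE.
have -> : (a : nat) = a' by []. have -> : (b : nat) = b' by [].
rewrite /block_mx [RHS]mxE.
case: splitP => [p Hp|p Hp]; last first.
  by rewrite Hp ltnNge row_mx0 mxE.
rewrite mxE; case: splitP => [q Hq|q Hq]; last first.
  by rewrite mxE.
move: p q Hp Hq; elim/(@idx_cases k m.+1) => l i; elim/(@idx_cases k n.+1) => l' j.
move=> Hp Hq; rewrite Hp Hq GAE.
have -> : ((idx l i : 'I_(k * m.+1)) : nat) = (l * m.+1 + i)%N by [].
have -> : ((idx l' j : 'I_(k * n.+1)) : nat) = (l' * n.+1 + j)%N by [].
rewrite !divnMDl // !divn_small // !addn0 !modnMDl !modn_small //.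
by rewrite val_eqE /mx_at !valK.
Qed.

Lemma GA_of A : GA A = Cmat *m T A *m Dmat^t*.
Proof. by rewrite -mainF !mulmxA Cunit mul1mx -mulmxA Dunit mulmx1. Qed.

Lemma main_sec : (exists A, T A != 0) ->
  injective T /\
  exists k : nat, [/\ (1 <= k)%N, (k * m.+1 <= r)%N, (k * n.+1 <= s)%N &
    exists (U : 'M[CC]_r) (V : 'M[CC]_s),
      [/\ unitary_mx U, unitary_mx V &
          forall A : 'M[CC]_(m.+1, n.+1), T A = U *m blockdiag_rep r s k A *m V]].
Proof.
move=> hnz.
have Wnz : W != 0.
  apply/negP => /eqP W0; case: hnz => A; apply/negP; rewrite negbK.
  rewrite (matrix_sum_delta A) Tsum big1 // => i _; rewrite Tsum big1 // => j _.
  by rewrite TZ -/(F i j) F_dec W0 adj0 mulmx0 mul0mx scaler0.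
have kpos : (0 < k)%N by rewrite lt0n mxrank_eq0.
split.
  move=> A A' HA; have G : GA A = GA A' by rewrite !GA_of HA.
  apply/matrixP => i j.
  have := congr1 (fun M : 'M[CC]_(k * m.+1, k * n.+1) => M (idx (Ordinal kpos) i) (idx (Ordinal kpos) j)) G.
  by rewrite !GAE eqxx.
have [q1 [X [e1 UX]]] := @complete_unitary _ _ _ Cunit.
have [q2 [Y [e2 VY]]] := @complete_unitary _ _ _ Dunit.
exists k; split => //; first by rewrite -e1 leq_addr.
  by rewrite -e2 leq_addr.
exists ((castmx (e1, erefl r) (col_mx Cmat X))^t*), (castmx (e2, erefl s) (col_mx Dmat Y)).
split.
- by apply: unitary_of; rewrite trmxC_unitary castmx_unitary.
- by apply: unitary_of; rewrite castmx_unitary.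
move=> A; rewrite (BD_cast A _ _ e1 e2) adj_cast castmx_mul3 tr_col_mx map_row_mx.
by rewrite mul_row_block mul_row_col !mulmx0 !addr0 mul0mx addr0 mainF.
Qed.
End Main.

Theorem lemma3p5 (m n r s : nat) (T : 'M[CC]_(m, n) -> 'M[CC]_(r, s)) :
  triple_morphism T ->
  (exists A : 'M[CC]_(m, n), T A != 0) ->
  injective T /\
  exists k : nat, [/\ (1 <= k)%N, (k * m <= r)%N, (k * n <= s)%N &
    exists (U : 'M[CC]_r) (V : 'M[CC]_s),
      [/\ unitary_mx U, unitary_mx V &
          forall A : 'M[CC]_(m, n), T A = U *m blockdiag_rep r s k A *m V]].
Proof.
case=> Tlin Ttr hnz.
have T0 : T 0 = 0.
  have := Tlin 1 0 0; rewrite scale1r addr0 => /(congr1 (fun x => x - T 0)).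
  by rewrite scale1r subrr addrK => /esym.
case: m T Tlin Ttr hnz T0 => [|m] T Tlin Ttr hnz T0.
  case: hnz => A; have -> : A = 0 by apply/matrixP => -[].
  by rewrite T0 eqxx.
case: n T Tlin Ttr hnz T0 => [|n] T Tlin Ttr hnz T0.
  case: hnz => A; have -> : A = 0 by apply/matrixP => i [].
  by rewrite T0 eqxx.
exact: main_sec.
Qed.
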